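(* Let $n\ge3$, let the sites of an $n$-qubit chain be partitioned into nonempty consecutive intervals $L=\{1,\dots,a\}$, $C=\{a+1,\dots,a+k\}$, $R=\{a+k+1,\dots,n\}$, and let $W\in\mathrm{Sp}(2n,\mathbb{Z}_2)$ be the symplectic matrix of a Clifford unitary satisfying the left wall condition around $C$. Then $G_{\mathrm{left}}$ and $G_{\mathrm{right}}$ are $J$-orthogonal: $g^TJg'=0$ for all $g\in G_{\mathrm{left}}$, $g'\in G_{\mathrm{right}}$. Equivalently, the Pauli subgroups on $C$ corresponding to $G_{\mathrm{left}}$ and $G_{\mathrm{right}}$ pairwise commute.
   Context: Pauli operators modulo phases are identified with $\mathbb{Z}_2^{2n}$ via $(p_1,q_1,\dots,p_n,q_n)\mapsto X^{p_1}Z^{q_1}\otimes\cdots\otimes X^{p_n}Z^{q_n}$; symplectic form $J=\bigoplus_{i=1}^n\begin{pmatrix}0&1\\1&0\end{pmatrix}$ (Paulis commute iff $b^TJb'=0$); $\mathrm{Sp}(2n,\mathbb{Z}_2)=\{S:SJS^T=J\}$. $V_S$ denotes vectors supported on the site set $S$, $\mathbb{Z}_2^{2n}=V_L\oplus V_C\oplus V_R$, vectors $(l,c,r)$, $\pi_C$ the projection onto $V_C$. Left wall condition: for all $t\ge1$, $l\in V_L$: $W^t(l,0,0)\in V_L\oplus V_C\oplus\{0\}$. Internal subspaces: $G_{\mathrm{left}}=\pi_C(\mathrm{span}\{W^t(l,0,0):t\ge0,l\in V_L\})$, $G_{\mathrm{right}}=\pi_C(\mathrm{span}\{W^t(0,0,r):t\ge0,r\in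 V_R\})$. *)

(* Defs.v *)
From HB Require Import structures.
From mathcomp Require Import all_boot all_order all_algebra.
Set Implicit Arguments. Unset Strict Implicit. Unset Printing Implicit Defensive.
Import GRing.Theory.
Local Open Scope ring_scope.

(* Coordinate j belongs to site j./2 (0-based site), i.e. 1-based site j./2+1;
   coordinates 2i, 2i+1 are (p_{i+1}, q_{i+1}). *)
Definition vec (n : nat) := 'cV['F_2]_(2 * n).
Definition mat (n : nat) := 'M['F_2]_(2 * n).

Definition site {n} (j : 'I_(2 * n)) : nat := (j %/ 2)%N.

(* symplectic form J = direct sum of [[0,1],[1,0]] *)
Definition Jform (n : nat) : mat n :=
  \matrix_(i, j) (if (site i == site j) && (i != j) then 1 else 0).

Definition symplectic (n : nat) (S : mat n) : Prop :=
  S *m Jform n *m S^T = Jform n.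

Definition mxpow (n : nat) (W : mat n) (t : nat) : mat n :=
  iter t (mulmx W) 1%:M.

(* Site sets (0-based sites): L = [0,a), C = [a,a+k), R = [a+k,n). *)
Definition inL (a : nat) {n} (j : 'I_(2 * n)) : bool := (site j < a)%N.
Definition inC (a k : nat) {n} (j : 'I_(2 * n)) : bool :=
  (a <= site j < a + k)%N.
Definition inR (a k : nat) {n} (j : 'I_(2 * n)) : bool := (a + k <= site j)%N.

Definition supported_on {n} (P : 'I_(2 * n) -> bool) (v : vec n) : Prop :=
  forall j, ~~ P j -> v j 0 = 0.

Definition piC (a k : nat) {n} (v : vec n) : vec n :=
  \col_j (if inC a k j then v j 0 else 0).

Definition left_wall (a k : nat) {n} (W : mat n) : Prop :=
  forall (t : nat) (l : vec n), (1 <= t)%N -> supported_on (inL a) l ->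
    supported_on (fun j => inL a j || inC a k j) (mxpow W t *m l).

Definition in_span {n} (S : vec n -> Prop) (v : vec n) : Prop :=
  exists (m : nat) (c : 'I_m -> 'F_2) (u : 'I_m -> vec n),
    (forall i, S (u i)) /\ v = \sum_(i < m) c i *: u i.

Definition G_left (a k : nat) {n} (W : mat n) (g : vec n) : Prop :=
  exists v, in_span (fun x => exists t l, supported_on (inL a) l /\
                                      x = mxpow W t *m l) v
            /\ g = piC a k v.

Definition G_right (a k : nat) {n} (W : mat n) (g : vec n) : Prop :=
  exists v, in_span (fun x => exists t r, supported_on (inR a k) r /\
                                      x = mxpow W t *m r) v
            /\ g = piC a k v.

(* Main.v *)
Require Import Defs.
From mathcomp Require Import all_boot all_order all_algebra.
From mathcomp Require Import zify.
Set Implicit Arguments. Unset Strict Implicit. Unset Printing Implicit Defensive.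
Import GRing.Theory.
Local Open Scope ring_scope.

Section Aux.
Variable n : nat.

Lemma ltn_pp (i : 'I_(2 * n)) :
  ((if (i %% 2 == 0)%N then i.+1 else i.-1) < 2 * n)%N.
Proof. have := ltn_ord i. case: ifP => /eqP; lia. Qed.

Definition pp (i : 'I_(2 * n)) : 'I_(2 * n) := Ordinal (ltn_pp i).

Lemma site_pp i : site (pp i) = site i.
Proof. rewrite /site /=; case: ifP => /eqP; lia. Qed.

Lemma pp_inv i : pp (pp i) = i.
Proof.
apply/val_inj => /=; case E: (i %% 2 == 0)%N; move/eqP: E => E;
  case: ifP => /eqP; lia.
Qed.

Lemma Jform_pp i j : Jform n i j = (j == pp i)%:R.
Proof.
rewrite mxE; suff ->: ((site i == site j) && (i != j)) = (j == pp i)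
  by case: (j == pp i).
rewrite /site -val_eqE /= -(inj_eq val_inj) /=.
case: ifP => /eqP h.
- apply/idP/idP.
  + move=> /andP [/eqP h1 h2]. move: h2 => /eqP h2; apply/eqP; lia.
  + move=> /eqP h1; apply/andP; split; apply/eqP; lia.
- apply/idP/idP.
  + move=> /andP [/eqP h1 h2]. move: h2 => /eqP h2; apply/eqP; lia.
  + move=> /eqP h1; apply/andP; split; apply/eqP; lia.
Qed.

Definition form (u w : vec n) : 'F_2 := (u^T *m Jform n *m w) 0 0.

Lemma Jmul (w : vec n) : Jform n *m w = \col_i w (pp i) 0.
Proof.
apply/matrixP => i j; rewrite !ord1 !mxE (bigD1 (pp i)) //= big1.
  by rewrite Jform_pp eqxx mul1r addr0.
by move=> k hk; rewrite Jform_pp (negbTE hk) mul0r.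
Qed.

Lemma formE u w : form u w = \sum_i u i 0 * w (pp i) 0.
Proof.
rewrite /form -mulmxA Jmul mxE; apply: eq_bigr => i _; by rewrite !mxE.
Qed.

Lemma JJ : Jform n *m Jform n = 1%:M.
Proof.
apply/matrixP => i k; rewrite !mxE (bigD1 (pp i)) //= big1.
  by rewrite Jform_pp eqxx mul1r addr0 Jform_pp pp_inv eq_sym.
by move=> j hj; rewrite Jform_pp (negbTE hj) mul0r.
Qed.

Lemma form_suml m (c : 'I_m -> 'F_2) u w :
  form (\sum_(i < m) c i *: u i) w = \sum_(i < m) c i * form (u i) w.
Proof.
rewrite formE.
under eq_bigr => k _ do rewrite summxE mulr_suml.
rewrite exchange_big /=; apply: eq_bigr => i _.
rewrite formE mulr_sumr; apply: eq_bigr => k _; by rewrite mxE mulrA.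
Qed.

Lemma form_sumr m (c : 'I_m -> 'F_2) u w :
  form w (\sum_(i < m) c i *: u i) = \sum_(i < m) c i * form w (u i).
Proof.
rewrite formE.
under eq_bigr => k _ do rewrite summxE mulr_sumr.
rewrite exchange_big /=; apply: eq_bigr => i _.
rewrite formE mulr_sumr; apply: eq_bigr => k _.
by rewrite mxE mulrCA.
Qed.

Lemma span_ortho (S1 S2 : vec n -> Prop) v v' :
  (forall u w, S1 u -> S2 w -> form u w = 0) ->
  in_span S1 v -> in_span S2 v' -> form v v' = 0.
Proof.
move=> H [m [c [u [Hu ->]]]] [m' [c' [u' [Hu' ->]]]].
rewrite form_suml big1 // => i _.
by rewrite form_sumr big1 ?mulr0 // => j _; rewrite H ?mulr0.
Qed.

Lemma span_supp (P : 'I_(2 * n) -> bool) (S : vec n -> Prop) v :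
  (forall u, S u -> supported_on P u) -> in_span S v -> supported_on P v.
Proof.
move=> H [m [c [u [Hu ->]]]] j hj.
rewrite summxE big1 // => i _; by rewrite mxE H ?mulr0.
Qed.

Lemma form_disj (u w : vec n) : (forall i, u i 0 = 0 \/ w (pp i) 0 = 0) -> form u w = 0.
Proof.
move=> H; rewrite formE big1 // => i _; by case: (H i) => ->; rewrite ?mul0r ?mulr0.
Qed.

Lemma mxpowD (W : mat n) s t : mxpow W (s + t) = mxpow W s *m mxpow W t.
Proof.
elim: s => [|s IH]; first by rewrite /mxpow /= mul1mx.
by rewrite addSn /mxpow /= -/(mxpow W _) IH mulmxA.
Qed.

Lemma mxpowM (W : mat n) d m : mxpow W d = 1%:M -> mxpow W (d * m) = 1%:M.
Proof.
move=> H; elim: m => [|m IH]; first by rewrite muln0.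
by rewrite mulnS mxpowD H IH mul1mx.
Qed.

Lemma mxpow_unit (W : mat n) t : W \in unitmx -> mxpow W t \in unitmx.
Proof.
move=> hW; elim: t => [|t IH]; first by rewrite /mxpow /= unitmx1.
by rewrite /mxpow /= -/(mxpow W _) unitmx_mul hW IH.
Qed.

Lemma finite_order (W : mat n) : W \in unitmx ->
  exists d, (0 < d)%N /\ mxpow W d = 1%:M.
Proof.
move=> hW.
pose f := fun i : 'I_(#|{: mat n}|.+1) => mxpow W i.
have : ~~ injectiveb f.
  apply/negP => /injectiveP /leq_card; rewrite card_ord => h; suff: (#|{: mat n}| < #|{: mat n}|)%N by rewrite ltnn. exact h.
move=> /injectivePn [x [y hxy hf]].
have main : forall i j : nat, (i < j)%N -> mxpow W i = mxpow W j ->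
   exists d, (0 < d)%N /\ mxpow W d = 1%:M.
  move=> i j hij e; exists (j - i)%N; split; first by rewrite subn_gt0.
  move: e; rewrite -(subnK (ltnW hij)) mxpowD => e.
  have := congr1 (mulmx^~ (invmx (mxpow W i))) e.
  have hu := mxpow_unit i hW.
  by rewrite mulmxK // mulmxV // addnK => ->.
rewrite /f in hf.
case: (ltngtP x y) => h.
- exact: main h hf.
- exact: main h (esym hf).
- by move: hxy; rewrite -(inj_eq val_inj) /= h eqxx.
Qed.

End Aux.


Section Main.
Variables (n a k : nat) (W : mat n).
Hypothesis HS : symplectic W.
Hypothesis HW : left_wall a k W.

Definition Bm := Jform n *m W^T *m Jform n.

Lemma WB : W *m Bm = 1%:M.
Proof. by rewrite /Bm !mulmxA HS JJ. Qed.

Lemma W_unit : W \in unitmx.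
Proof. by case: (mulmx1_unit WB). Qed.

Lemma sympT : W^T *m Jform n *m W = Jform n.
Proof.
have h := mulmx1C WB.
have := congr1 (mulmx (Jform n)) h.
by rewrite mulmx1 /Bm !mulmxA JJ mul1mx.
Qed.

Lemma form_W (u w : vec n) : form (W *m u) (W *m w) = form u w.
Proof.
by rewrite /form trmx_mul -!mulmxA (mulmxA W^T) (mulmxA _ W) sympT.
Qed.

Lemma form_pow t (u w : vec n) :
  form (mxpow W t *m u) (mxpow W t *m w) = form u w.
Proof.
elim: t => [|t IH]; first by rewrite /mxpow /= !mul1mx.
by rewrite /mxpow /= -/(mxpow W t) -!mulmxA form_W IH.
Qed.

Lemma LC_pow d (l : vec n) : supported_on (inL a) l ->
  supported_on (fun j => inL a j || inC a k j) (mxpow W d *m l).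
Proof.
move=> hl; case: d => [|d].
  rewrite /mxpow /= mul1mx => j; rewrite negb_or => /andP [h _]; exact: hl.
exact: HW.
Qed.

Lemma KL0 d t (l r : vec n) : supported_on (inL a) l -> supported_on (inR a k) r ->
  form (mxpow W (d + t) *m l) (mxpow W t *m r) = 0.
Proof.
move=> hl hr; rewrite addnC mxpowD -mulmxA form_pow.
apply: form_disj => i.
case h: (inL a i || inC a k i).
- right; apply: hr; move: h; rewrite /inL /inC /inR site_pp; lia.
- left; apply: (LC_pow d hl); by rewrite h.
Qed.

Lemma KL s t (l r : vec n) : supported_on (inL a) l -> supported_on (inR a k) r ->
  form (mxpow W s *m l) (mxpow W t *m r) = 0.
Proof.
move=> hl hr.
have [N [hN hN1]] := finite_order W_unit.
have -> : mxpow W s = mxpow W (s + N * t).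
  by rewrite mxpowD mxpowM // mulmx1.
have ht : (t <= s + N * t)%N by rewrite (leq_trans (leq_pmull t hN)) // leq_addl.
by rewrite -(subnK ht) KL0.
Qed.

Lemma CR t (r : vec n) : supported_on (inR a k) r ->
  forall j, inL a j -> (mxpow W t *m r) j 0 = 0.
Proof.
move=> hr j hj.
pose l : vec n := \col_i (i == pp j)%:R.
have hl : supported_on (inL a) l.
  move=> i hi; rewrite mxE; case: eqP => // e; move: hi hj; rewrite e /inL site_pp => /negP; done.
have := KL 0 t hl hr.
rewrite /mxpow /= -/(mxpow W t) mul1mx formE (bigD1 (pp j)) //= big1.
  by rewrite mxE eqxx mul1r pp_inv addr0.
by move=> i hi; rewrite mxE (negbTE hi) mul0r.
Qed.

Lemma form_piC (x y : vec n) :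
  supported_on (fun j => inL a j || inC a k j) x ->
  supported_on (fun j => inC a k j || inR a k j) y ->
  form (piC a k x) (piC a k y) = form x y.
Proof.
move=> hx hy; rewrite !formE; apply: eq_bigr => i _; rewrite !mxE.
have -> : inC a k (pp i) = inC a k i by rewrite /inC site_pp.
case hC: (inC a k i) => //.
case hL: (inL a i).
- rewrite hy ?mulr0 //; move: hC hL; rewrite /inL /inC /inR site_pp; lia.
- rewrite hx ?mul0r //; by rewrite hL hC.
Qed.

End Main.

Theorem lemma5 (n a k : nat) (W : 'M['F_2]_(2 * n)) :
  (3 <= n)%N -> (0 < a)%N -> (0 < k)%N -> (a + k < n)%N ->
  symplectic W ->
  left_wall a k W ->
  forall g g' : 'cV['F_2]_(2 * n),
    G_left a k W g -> G_right a k W g' ->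
    g^T *m Jform n *m g' = 0.
Proof.
move=> _ _ _ _ HS HW g g' [v [hv ->]] [v' [hv' ->]].
have hvs : supported_on (fun j => inL a j || inC a k j) v.
  apply: span_supp hv => x [t [l [hl ->]]]; exact: (LC_pow HW).
have hvs' : supported_on (fun j => inC a k j || inR a k j) v'.
  apply: span_supp hv' => x [t [r [hr ->]]] j hj.
  apply: (CR HS HW t hr); move: hj; rewrite /inL /inC /inR; lia.
have := form_piC hvs hvs'.
rewrite (span_ortho _ hv hv').
  move=> h; apply/matrixP => i j; rewrite !ord1; move: h; rewrite /form => ->; by rewrite mxE.
move=> u w [s [l [hl ->]]] [t [r [hr ->]]]; exact: (KL HS HW).
Qed.
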